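(* Let $N\ge 1$, let $C_1\ge C_2\ge\cdots\ge C_N>0$ be link capacities, let $X$ be a total traffic demand with $0\le X\le \sum_{i=1}^N C_i$, and let $E:[0,C_1]\to\mathbb{R}$ be a strictly concave function (the common per-link cost). Consider the problem of minimizing $E_B(x_1,\dots,x_N)=\sum_{i=1}^N E(x_i)$ subject to $0\le x_i\le C_i$ for all $i$ and $\sum_{i=1}^N x_i = X$. Then $E_B$ attains its minimum over this feasible set at the allocation defined recursively by $x_i=\min\{C_i,\ X-\sum_{j<i}x_j\}$ for $i=1,\dots,N$.
   Context: The allocation $x_i=\min\{C_i, X-\sum_{j<i}x_j\}$ is the sequential ''water-filling'' allocation: each link is filled to capacity before any traffic is sent on the next one. *)

(* Defs.v *)
From mathcomp Require Import all_boot all_order all_algebra.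
Set Implicit Arguments. Unset Strict Implicit. Unset Printing Implicit Defensive.
Import Order.TTheory GRing.Theory Num.Theory.
Local Open Scope ring_scope.

Definition strictly_concave_on (R : realFieldType) (a b : R) (E : R -> R) : Prop :=
  forall x y t : R, a <= x <= b -> a <= y <= b -> x != y -> 0 < t < 1 ->
    t * E x + (1 - t) * E y < E (t * x + (1 - t) * y).

(* wf_prefix C X n = x_0 + ... + x_(n-1) for the water-filling allocation
   (links indexed 0..N-1) *)
Fixpoint wf_prefix (R : realFieldType) (C : nat -> R) (X : R) (n : nat) : R :=
  match n with
  | 0 => 0
  | n'.+1 => wf_prefix C X n' + Num.min (C n') (X - wf_prefix C X n')
  end.

Definition waterfill (R : realFieldType) (C : nat -> R) (X : R) (i : nat) : R :=
  Num.min (C i) (X - wf_prefix C X i).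

Definition feasible (R : realFieldType) (N : nat) (C : nat -> R) (X : R)
    (x : nat -> R) : Prop :=
  (forall i, (i < N)%N -> 0 <= x i <= C i) /\ \sum_(i < N) x i = X.

(* Main.v *)
Require Import Defs.
From mathcomp Require Import all_boot all_order all_algebra all_fingroup.
From mathcomp Require Import ring lra.
Import Order.TTheory GRing.Theory Num.Theory.
Local Open Scope ring_scope.

Section S.
Variable R : realFieldType.
Variable M : R.
Variable E : R -> R.
Hypothesis hE : strictly_concave_on 0 M E.

Lemma key3 p q r : 0 <= p -> p < q -> q < r -> r <= M ->
  (r - q) * E p + (q - p) * E r <= (r - p) * E q.
Proof.
move=> p0 pq qr rM.
have rp : 0 < r - p by lra.
set t := (r - q) / (r - p).
have t01 : 0 < t < 1.
  apply/andP; split; rewrite /t.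
    by apply: divr_gt0; lra.
  by rewrite ltr_pdivrMr //; lra.
have hq : t * p + (1 - t) * r = q.
  rewrite /t; field; lra.
have H := hE p r t.
rewrite hq in H.
have {}H : t * E p + (1 - t) * E r < E q.
  apply: H => //; try (apply/andP; split; lra).
  by rewrite lt_eqF //; lra.
have e1 : (r - q) * E p + (q - p) * E r = (r - p) * (t * E p + (1 - t) * E r).
  rewrite /t; field; lra.
by rewrite e1 ler_pM2l //; exact: ltW.
Qed.

Definition sl x y := (E y - E x) / (y - x).

Lemma sl3 p q r : 0 <= p -> p < q -> q < r -> r <= M ->
  sl p r <= sl p q /\ sl q r <= sl p r.
Proof.
move=> p0 pq qr rM.
have K := @key3 p q r p0 pq qr rM.
have qp : q - p != 0 by rewrite subr_eq0 gt_eqF.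
have rp : r - p != 0 by rewrite subr_eq0 gt_eqF // (lt_trans pq qr).
have rq : r - q != 0 by rewrite subr_eq0 gt_eqF.
split; rewrite -subr_ge0.
  have -> : sl p q - sl p r = ((r-p)*E q - ((r-q)*E p + (q-p)*E r)) / ((q-p)*(r-p)).
    by rewrite /sl; field; rewrite ?qp ?rp.
  apply: divr_ge0; first by rewrite subr_ge0.
  apply: mulr_ge0; lra.
have -> : sl p r - sl q r = ((r-p)*E q - ((r-q)*E p + (q-p)*E r)) / ((r-q)*(r-p)).
  by rewrite /sl; field; rewrite ?rq ?rp.
apply: divr_ge0; first by rewrite subr_ge0.
apply: mulr_ge0; lra.
Qed.

Lemma chord u b a c : 0 <= u -> u < b -> b <= a -> a < c -> c <= M ->
  (b - u) * sl a c <= E b - E u.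
Proof.
move=> u0 ub ba ac cM.
have h1 : sl a c <= sl u b.
  have [A1 A2] := @sl3 u b c u0 ub (le_lt_trans ba ac) cM.
  apply: le_trans A1.
  apply: le_trans A2.
  case: (eqVneq b a) => [->|nba]; first by [].
  have ba' : b < a by rewrite lt_neqAle nba.
  have [_ B2] := @sl3 b a c (le_trans u0 (ltW ub)) ba' ac cM.
  exact: B2.
have bu : 0 < b - u by lra.
have -> : E b - E u = (b - u) * sl u b.
  rewrite /sl mulrC divfK //; by rewrite gt_eqF.
by rewrite ler_pM2l.
Qed.

Lemma transfer N (a D mu : R) (b : nat -> R) : 0 <= mu <= 1 ->
  (forall j, (j < N)%N -> 0 <= b j <= a) -> D = mu * \sum_(j < N) b j -> a + D <= M ->
  E (a + D) + \sum_(j < N) E (b j - mu * b j) <= E a + \sum_(j < N) E (b j).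
Proof.
move=> /andP[mu0 mu1] hb hD haD.
have mb0 : forall j : 'I_N, 0 <= mu * b j.
  move=> j; have /andP[b0 _] := hb j (ltn_ord j); exact: mulr_ge0.
have D0 : 0 <= D by rewrite hD; apply: mulr_ge0 => //; apply: sumr_ge0 => j _; have /andP[] := hb j (ltn_ord j).
case: (eqVneq D 0) => [eD|nD].
  have hz : forall j : 'I_N, mu * b j = 0.
    move=> j; apply: (@psumr_eq0P _ _ predT (fun j : 'I_N => mu * b j)) => //.
    by rewrite -mulr_sumr -hD.
  rewrite eD addr0 lerD2l; apply: ler_sum => j _; by rewrite hz subr0.
have Dp : 0 < D by rewrite lt_neqAle eq_sym nD.
set s := sl a (a + D).
have hs : E (a + D) - E a = D * s.
  rewrite /s /sl (addrC a D) addrK mulrC divfK //; by rewrite gt_eqF.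
have step : forall j : 'I_N, mu * b j * s <= E (b j) - E (b j - mu * b j).
  move=> j; have /andP[b0 ba] := hb j (ltn_ord j).
  case: (eqVneq (mu * b j) 0) => [->|nz].
    by rewrite mul0r subr0 subrr.
  have mbp : 0 < mu * b j by rewrite lt_neqAle eq_sym nz mb0.
  have u0 : 0 <= b j - mu * b j.
    have -> : b j - mu * b j = (1 - mu) * b j by ring.
    apply: mulr_ge0 => //; lra.
  have := @chord (b j - mu * b j) (b j) a (a + D) u0 _ ba _ haD.
  have -> : b j - (b j - mu * b j) = mu * b j by ring.
  apply; lra.
have : \sum_(j < N) mu * b j * s <= \sum_(j < N) (E (b j) - E (b j - mu * b j)).
  by apply: ler_sum => j _; exact: step.
rewrite -mulr_suml -mulr_sumr -hD sumrB -hs => H.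
lra.
Qed.
End S.
Lemma wf_shift (R : realFieldType) (C : nat -> R) X n :
  wf_prefix C X n.+1 = Num.min (C 0%N) X +
     wf_prefix (fun i => C i.+1) (X - Num.min (C 0%N) X) n.
Proof.
elim: n => [|n IH]; first by rewrite /= subr0 add0r addr0.
have -> : wf_prefix C X n.+2 = wf_prefix C X n.+1 + Num.min (C n.+1) (X - wf_prefix C X n.+1) by [].
rewrite IH.
have -> : wf_prefix (fun i => C i.+1) (X - Num.min (C 0%N) X) n.+1 =
  wf_prefix (fun i => C i.+1) (X - Num.min (C 0%N) X) n + Num.min (C n.+1) (X - Num.min (C 0%N) X - wf_prefix (fun i => C i.+1) (X - Num.min (C 0%N) X) n) by [].
by rewrite opprD addrA addrA.
Qed.

Lemma waterfill_shift (R : realFieldType) (C : nat -> R) X n :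
  waterfill C X n.+1 = waterfill (fun i => C i.+1) (X - Num.min (C 0%N) X) n.
Proof. by rewrite /waterfill wf_shift opprD addrA. Qed.

Lemma waterfill0 (R : realFieldType) (C : nat -> R) X :
  waterfill C X 0 = Num.min (C 0%N) X.
Proof. by rewrite /waterfill /= subr0. Qed.

Lemma exmax (R : realFieldType) (x : nat -> R) N :
  exists k, (k < N.+1)%N /\ forall j, (j < N.+1)%N -> x j <= x k.
Proof.
elim: N => [|N [k [hk IH]]].
  by exists 0%N; split => // j; rewrite ltnS leqn0 => /eqP ->.
case: (leP (x N.+1) (x k)) => h.
  exists k; split; first by apply: ltnW.
  move=> j; rewrite ltnS leq_eqVlt => /orP[/eqP ->|]; [by []|exact: IH].
exists N.+1; split => // j; rewrite ltnS leq_eqVlt => /orP[/eqP ->|hj]; first by [].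
exact: le_trans (IH j hj) (ltW h).
Qed.

Definition sw (k i : nat) : nat := if i == 0%N then k else if i == k then 0%N else i.

Lemma sum_swap (R : realFieldType) (g : nat -> R) N k : (k < N)%N ->
  \sum_(i < N) g (sw k i) = \sum_(i < N) g i.
Proof.
case: N => [//|n] hk.
pose k' : 'I_n.+1 := Ordinal hk.
rewrite [RHS](reindex_inj (@perm_inj _ (tperm ord0 k'))).
apply: eq_bigr => j _; congr g.
case: (eqVneq j ord0) => [->|j0].
  by rewrite tpermL /sw.
case: (eqVneq j k') => [ejk|jk].
  rewrite ejk tpermR /sw /=.
  have -> : (k == 0%N) = false.
    apply/eqP => e; move/eqP: j0; apply; apply/val_inj; rewrite ejk /=; exact e.
  by rewrite eqxx.
rewrite tpermD; [|by rewrite eq_sym|by rewrite eq_sym].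
rewrite /sw.
have -> : (nat_of_ord j == 0%N) = false by apply/negbTE.
have -> : (nat_of_ord j == k) = false by apply/negbTE.
by [].
Qed.

Lemma sum_wf (R : realFieldType) (C : nat -> R) X n :
  \sum_(i < n) waterfill C X i = wf_prefix C X n.
Proof. by elim: n => [|n IH]; rewrite ?big_ord0 // big_ord_recr IH. Qed.

Lemma pref_min (R : realFieldType) (C : nat -> R) X n :
  (forall i, (i < n)%N -> 0 <= C i) -> 0 <= X ->
  wf_prefix C X n = Num.min (\sum_(i < n) C i) X.
Proof.
move=> hC hX; elim: n hC => [|n IH] hC.
  by rewrite big_ord0 /= min_l.
rewrite /= IH; last by move=> i hi; apply: hC; apply: ltnW.
have Cn := hC n (ltnSn n).
rewrite big_ord_recr /=.
set S := \sum_(i < n) C i.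
case: (leP S X) => h1.
  case: (leP (C n) (X - S)) => h2.
    by rewrite min_l //; lra.
  by rewrite min_r; lra.
case: (leP (C n) (X - X)) => h2.
  by rewrite min_r; lra.
by rewrite min_r; lra.
Qed.

Lemma mainlem (R : realFieldType) (M : R) (E : R -> R) (hE : strictly_concave_on 0 M E) N :
  forall (C : nat -> R) X (x : nat -> R),
  (forall i j, (i <= j)%N -> (j < N)%N -> C j <= C i) -> ((0 < N)%N -> C 0%N <= M) ->
  (forall i, (i < N)%N -> 0 <= x i <= C i) -> \sum_(i < N) x i = X ->
  \sum_(i < N) E (waterfill C X i) <= \sum_(i < N) E (x i).
Proof.
elim: N => [|N IH] C X x hC hM hx hs; first by rewrite !big_ord0.
have key : forall x : nat -> R, (forall i, (i < N.+1)%N -> 0 <= x i <= C i) ->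
    \sum_(i < N.+1) x i = X -> (forall j, (j < N.+1)%N -> x j <= x 0%N) ->
    \sum_(i < N.+1) E (waterfill C X i) <= \sum_(i < N.+1) E (x i).
  move=> {hx hs} x hx hs hmax.
  set a := x 0%N. set w0 := Num.min (C 0%N) X.
  set T := \sum_(j < N) x j.+1.
  have hs' : a + T = X by rewrite -hs big_ord_recl.
  have T0 : 0 <= T by apply: sumr_ge0 => j _; have /andP[] := hx j.+1 (ltn_ord j).
  have /andP[a0 aC] := hx 0%N (ltn0Sn N).
  have w0C : w0 <= C 0%N by rewrite /w0 ge_min lexx.
  have w0X : w0 <= X by rewrite /w0 ge_min lexx orbT.
  have aw0 : a <= w0 by rewrite /w0 le_min aC /=; lra.
  set X' := X - w0.
  set D := w0 - a.
  set mu := if T == 0 then 0 else D / T.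
  have hD : D = mu * T.
    rewrite /mu; case: (eqVneq T 0) => [e|nT].
      rewrite e mul0r /D; lra.
    by rewrite divfK.
  have mu01 : 0 <= mu <= 1.
    rewrite /mu; case: (eqVneq T 0) => [e|nT]; first by rewrite lexx ler01.
    have Tp : 0 < T by rewrite lt_neqAle eq_sym nT T0.
    apply/andP; split; first by apply: divr_ge0; rewrite /D; lra.
    by rewrite ler_pdivrMr // mul1r /D; lra.
  have /andP[mu0 mu1] := mu01.
  have tr := @transfer R M E hE N a D mu (fun j => x j.+1) mu01.
  have hb : forall j, (j < N)%N -> 0 <= x j.+1 <= a.
    by move=> j hj; have /andP[-> _] := hx j.+1 hj; rewrite hmax.
  have {}tr := tr hb hD.
  have aD : a + D = w0 by rewrite /D; ring.
  rewrite aD in tr.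
  have {}tr := tr (le_trans w0C (hM (ltn0Sn N))).
  rewrite big_ord_recl [X in _ <= X]big_ord_recl waterfill0 -/w0.
  have e2 : \sum_(i < N) E (x (lift ord0 i)) = \sum_(j < N) E (x j.+1).
    by apply: eq_bigr => i _; rewrite lift0.
  have e1 : \sum_(i < N) E (waterfill C X (lift ord0 i)) =
            \sum_(j < N) E (waterfill (fun i => C i.+1) X' j).
    by apply: eq_bigr => i _; rewrite lift0 waterfill_shift.
  rewrite e1 e2.
  apply: le_trans tr.
  rewrite lerD2l.
  apply: (IH (fun i => C i.+1) X' (fun j => x j.+1 - mu * x j.+1)).
  - by move=> i j hij hj; apply: hC.
  - by move=> hN; apply: le_trans (hM (ltn0Sn N)); apply: hC.
  - move=> i hi; have /andP[x0 xC] := hx i.+1 hi.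
    apply/andP; split.
      have -> : x i.+1 - mu * x i.+1 = (1 - mu) * x i.+1 by ring.
      apply: mulr_ge0 => //; lra.
    apply: le_trans xC; have : 0 <= mu * x i.+1 by apply: mulr_ge0.
    lra.
  - rewrite sumrB -mulr_sumr -/T -hD /X' /D; lra.
have [k [hk hkmax]] := @exmax R x N.
pose x' := fun i => x (sw k i).
have -> : \sum_(i < N.+1) E (x i) = \sum_(i < N.+1) E (x' i).
  by rewrite /x' (@sum_swap R (fun i => E (x i)) _ _ hk).
apply: key.
- move=> i hi; rewrite /x' /sw.
  case: (eqVneq i 0%N) => [->|i0].
    have /andP[xk0 xkC] := hx k hk.
    by rewrite xk0 /= (le_trans xkC) // hC.
  case: (eqVneq i k) => [ik|ik].
    have /andP[x00 x0C] := hx 0%N (ltn0Sn N).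
    by rewrite x00 /= (le_trans (hkmax 0%N (ltn0Sn N))) // -ik; have /andP[] := hx i hi.
  exact: hx.
- by rewrite /x' (@sum_swap R x _ _ hk).
- move=> j hj; rewrite /x' /sw /=.
  case: ifP => _; first exact: hkmax.
  case: ifP => _; first exact: hkmax.
  exact: hkmax.
Qed.

Theorem proposition1 (R : realFieldType) (N : nat) (C : nat -> R) (X : R)
    (E : R -> R)
    (hN : (1 <= N)%N)
    (hCdec : forall i j : nat, (i <= j)%N -> (j < N)%N -> C j <= C i)
    (hCpos : forall i : nat, (i < N)%N -> 0 < C i)
    (hX0 : 0 <= X) (hXle : X <= \sum_(i < N) C i)
    (hE : strictly_concave_on 0 (C 0%N) E) :
  feasible N C X (waterfill C X) /\
  (forall x : nat -> R, feasible N C X x ->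
     \sum_(i < N) E (waterfill C X i) <= \sum_(i < N) E (x i)).
Proof.
split.
  split.
    move=> i hi.
    have hp : wf_prefix C X i <= X.
      rewrite pref_min //; first by rewrite ge_min lexx orbT.
      move=> j hj; apply: ltW; apply: hCpos; exact: ltn_trans hj hi.
    rewrite /waterfill; apply/andP; split.
      rewrite le_min; apply/andP; split; first exact: ltW (hCpos i hi).
      by rewrite subr_ge0.
    by rewrite ge_min lexx.
  rewrite sum_wf pref_min //; first by rewrite min_r.
  by move=> j hj; apply: ltW; apply: hCpos.
move=> x [hx hs].
apply: (@mainlem R (C 0%N) E hE N C X x hCdec (fun _ => lexx _) hx hs).
Qed.
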